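(* Let $w_1,\dots,w_N\in\mathbb{R}^d$, let $\mathcal{V}$ be a linear subspace of $\mathbb{S}^d$, and let $\mathcal{C}^*=\{\sum_{i=1}^N\lambda_iw_iw_i^T:\lambda_i\ge0\}$. Consider the linear program in the variables $X\in\mathbb{S}^d$, $\lambda,t\in\mathbb{R}^N$: $$\text{maximize }\sum_{i=1}^Nt_i\ \text{ subject to } X\in\mathcal{V},\ X=\sum_{i=1}^N\lambda_iw_iw_i^T,\ \lambda_i\ge t_i,\ 1\ge t_i\ge0\ (i=1,\dots,N).$$ For any optimal solution $(X,\lambda,t)$, $X\in\mathcal{V}\cap\mathcal{C}^*$ and $\operatorname{rank}X\ge\operatorname{rank}Y$ for all $Y\in\mathcal{V}\cap\mathcal{C}^*$.
   Context: $\mathbb{S}^d$ denotes the space of real symmetric $d\times d$ matrices. *)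

(* Defs.v *)
From HB Require Import structures.
From mathcomp Require Import all_boot all_order all_algebra.
Set Implicit Arguments. Unset Strict Implicit. Unset Printing Implicit Defensive.
Import Order.TTheory GRing.Theory Num.Theory.
Local Open Scope ring_scope.

Definition symmetric_mx (R : ringType) (d : nat) (A : 'M[R]_d) : Prop := A^T = A.

Definition wsum (R : comRingType) (d N : nat) (w : 'I_N -> 'cV[R]_d)
  (lam : 'I_N -> R) : 'M[R]_d :=
  \sum_(i < N) lam i *: (w i *m (w i)^T).

Definition in_cone (R : realFieldType) (d N : nat) (w : 'I_N -> 'cV[R]_d)
  (Y : 'M[R]_d) : Prop :=
  exists lam : 'I_N -> R, (forall i, 0 <= lam i) /\ Y = wsum w lam.

Definition lp_feasible (R : realFieldType) (d N : nat) (w : 'I_N -> 'cV[R]_d)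
  (V : {vspace 'M[R]_d}) (X : 'M[R]_d) (lam t : 'I_N -> R) : Prop :=
  [/\ X \in V, X = wsum w lam,
      (forall i, t i <= lam i) & (forall i, 0 <= t i <= 1)].

Definition lp_optimal (R : realFieldType) (d N : nat) (w : 'I_N -> 'cV[R]_d)
  (V : {vspace 'M[R]_d}) (X : 'M[R]_d) (lam t : 'I_N -> R) : Prop :=
  lp_feasible w V X lam t /\
  forall (X' : 'M[R]_d) (lam' t' : 'I_N -> R),
    lp_feasible w V X' lam' t' -> \sum_(i < N) t' i <= \sum_(i < N) t i.

(* Main.v *)
Require Import Defs.
From HB Require Import structures.
From mathcomp Require Import all_boot all_order all_algebra.
From mathcomp Require Import lra zify.
Import Order.TTheory GRing.Theory Num.Theory.
Local Open Scope ring_scope.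

Lemma wsum_lin (R : realFieldType) (d N : nat) (w : 'I_N -> 'cV[R]_d)
  (lam mu : 'I_N -> R) (c : R) :
  wsum w (fun i => lam i + c * mu i) = wsum w lam + c *: wsum w mu.
Proof.
rewrite /wsum scaler_sumr -big_split /=; apply: eq_bigr => i _.
by rewrite scalerDl scalerA.
Qed.

Lemma row_wsum (R : realFieldType) (d N : nat) (w : 'I_N -> 'cV[R]_d)
  (lam : 'I_N -> R) (u : 'rV[R]_d) :
  u *m wsum w lam = \sum_(i < N) (lam i * (u *m w i) 0 0) *: (w i)^T.
Proof.
rewrite /wsum mulmx_sumr; apply: eq_bigr => i _.
set c := (u *m w i) 0 0.
have E : u *m w i = c%:M by exact: mx11_scalar.
by rewrite -scalemxAr mulmxA E mul_scalar_mx scalerA.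
Qed.

Lemma ker_incl (R : realFieldType) (d N : nat) (w : 'I_N -> 'cV[R]_d)
  (lam mu : 'I_N -> R) (u : 'rV[R]_d) :
  (forall i, 0 <= lam i) -> (forall i, mu i != 0 -> 0 < lam i) ->
  u *m wsum w lam = 0 -> u *m wsum w mu = 0.
Proof.
move=> hl hs hu.
have h0 : (u *m wsum w lam *m u^T) 0 0 = 0 by rewrite hu mul0mx mxE.
rewrite row_wsum mulmx_suml summxE in h0.
have hterm : forall i, ((lam i * (u *m w i) 0 0) *: (w i)^T *m u^T) 0 0
   = lam i * ((u *m w i) 0 0) ^+ 2.
  move=> i; set c := (u *m w i) 0 0.
  have E : u *m w i = c%:M by exact: mx11_scalar.
  rewrite -scalemxAl mxE -trmx_mul E tr_scalar_mx mxE eqxx mulr1n.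
  by rewrite expr2 mulrA.
rewrite (eq_bigr _ (fun i _ => hterm i)) in h0.
have h0' := psumr_eq0P (fun i _ => mulr_ge0 (hl i) (sqr_ge0 ((u *m w i) 0 0))) h0.
have hz : forall i, mu i * (u *m w i) 0 0 = 0.
  move=> i; have [->|nz] := eqVneq (mu i) 0; first by rewrite mul0r.
  have /eqP := h0' i isT.
  rewrite mulf_eq0 (gt_eqF (hs i nz)) /= expf_eq0 /= => /eqP ->.
  by rewrite mulr0.
rewrite row_wsum; apply: big1 => i _; by rewrite hz scale0r.
Qed.

Theorem corollary3 (R : realFieldType) (d N : nat) (w : 'I_N -> 'cV[R]_d)
  (V : {vspace 'M[R]_d})
  (hV : forall A : 'M[R]_d, A \in V -> symmetric_mx A)
  (X : 'M[R]_d) (lam t : 'I_N -> R) :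
  lp_optimal w V X lam t ->
  X \in V /\ in_cone w X /\
  (forall Y : 'M[R]_d, Y \in V -> in_cone w Y -> (\rank Y <= \rank X)%N).
Proof.
move=> [[XV Xe tl t01] opt].
have lam0 : forall i, 0 <= lam i.
  by move=> i; apply: le_trans (tl i); case/andP: (t01 i).
split=> //; split; first by exists lam.
move=> Y YV [mu [mu0 Ye]].
have supp : forall i, mu i != 0 -> 0 < lam i.
  move=> j nz; rewrite lt_def (lam0 j) andbT; apply/negP => /eqP lj.
  have tj : t j = 0.
    apply/le_anti; have := tl j; rewrite lj => ->; by case/andP: (t01 j).
  have mj : 0 < mu j by rewrite lt_def nz mu0.
  pose lam' := fun i => lam i + (mu j)^-1 * mu i.
  pose t' := fun i => t i + (i == j)%:R.
  have F : lp_feasible w V (X + (mu j)^-1 *: Y) lam' t'.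
    split.
    - by rewrite memvD // memvZ.
    - by rewrite /lam' wsum_lin Xe Ye.
    - move=> i; rewrite /t' /lam'; have [->|ne] := eqVneq i j.
        by rewrite tj lj mulVf ?(gt_eqF mj) // add0r.
      rewrite addr0 -[t i]addr0; apply: lerD; first exact: tl.
      by rewrite mulr_ge0 // invr_ge0 ltW.
    - move=> i; rewrite /t'; have [->|ne] := eqVneq i j.
        by rewrite tj add0r ler01 lexx.
      by rewrite addr0.
  have S1 : \sum_(i < N) ((i == j)%:R : R) = 1.
    by rewrite (bigD1 j) //= eqxx big1 ?addr0 // => i /negbTE ->.
  have := opt _ _ _ F; rewrite /t' big_split /= S1; lra.
have sub : (kermx X <= kermx Y)%MS.
  apply/row_subP => i; rewrite sub_kermx Ye; apply/eqP.
  apply: (@ker_incl R d N w lam mu _ lam0 supp).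
  by rewrite -Xe; apply/eqP; rewrite -sub_kermx row_sub.
move: (mxrankS sub); rewrite !mxrank_ker.
have := rank_leq_col X; have := rank_leq_col Y; lia.
Qed.
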